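(* Let $\boldsymbol{k}$ be a field of characteristic zero, $P=\boldsymbol{k}[x^1,\dots,x^n]$ with a symplectic Poisson bracket $\{\ ,\ \}$, $I\subseteq P$ a Poisson ideal, $A=P/I$, and $(\Omega_{A|\boldsymbol{k}})^\sharp\subseteq\operatorname{Der}(A)$ the $A$-submodule generated by the classes $\{a,\ \}+I\operatorname{Der}(P)$, $a\in P$. (1) There is a well-defined $A$-bilinear map $\omega^{\mathrm{Ham}}:(\Omega_{A|\boldsymbol{k}})^\sharp\times\operatorname{Der}(A)\to A$ determined by $\omega^{\mathrm{Ham}}(\{a,\ \}+I\operatorname{Der}(P),\,X+I\operatorname{Der}(P))=X(a)+I$ for $a\in P$, $X\in\operatorname{Der}_I(P)$, i.e. the value does not depend on the chosen representatives $a$ and $X$. (2) Let $\delta^{\mathrm{Ham}}$ be the naive de Rham differential of the Lie-Rinehart algebra $((\Omega_{A|\boldsymbol{k}})^\sharp,A)$. Then the restriction of $\omega^{\mathrm{Ham}}$ to $(\Omega_{A|\boldsymbol{k}})^\sharp\times(\Omega_{A|\boldsymbol{k}})^\sharp$, viewed as an element of $\operatorname{Alt}^2_A((\Omega_{A|\boldsymbol{k}})^\sharp,A)$, satisfies $\delta^{\mathrm{Ham}}\omega^{\mathrm{Ham}}=0$.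
   Context: The Poisson bracket is symplectic: its Poisson tensor $\Pi^{ij}=\{x^i,x^j\}\in P$ is non-degenerate (invertible). A Poisson ideal is an ideal with $\{I,P\}\subseteq I$. $\operatorname{Der}_I(P)=\{X\in\operatorname{Der}(P):X(I)\subseteq I\}$ and $\operatorname{Der}(A)\cong\operatorname{Der}_I(P)/I\operatorname{Der}(P)$. For a Lie-Rinehart algebra $(L,A)$ (a $\boldsymbol{k}$-Lie algebra and $A$-module $L$ acting on $A$ by derivations with $[X,aY]=X(a)Y+a[X,Y]$, $(aX)(b)=aX(b)$), the naive de Rham complex has cochains $\operatorname{Alt}^m_A(L,A)$ (alternating $A$-multilinear maps $L^m\to A$) and differential given by the Koszul formula $(\mathrm d\omega)(X_0,\dots,X_m)=\sum_i(-1)^iX_i(\omega(X_0,\dots,\widehat{X_i},\dots,X_m))+\sum_{i<j}(-1)^{i+j}\omega([X_i,X_j],X_0,\dots,\widehat{X_i},\dots,\widehat{X_j},\dots,X_m)$. $(\Omega_{A|\boldsymbol{k}})^\sharp$ is a Lie-Rinehart subalgebra of $(\operatorname{Der}(A),A)$ with the commutator bracket. *)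

(* Defs.v *)
From HB Require Import structures.
From mathcomp Require Import all_boot all_order all_algebra.
From mathcomp Require Export mpoly.
Set Implicit Arguments. Unset Strict Implicit. Unset Printing Implicit Defensive.
Import Order.TTheory GRing.Theory.
Local Open Scope ring_scope.

Section PoissonDefs.
Variables (F : fieldType) (n : nat).
Notation P := {mpoly F[n]}.

Definition isDer (D : P -> P) : Prop :=
  (forall (c : F) (p q : P), D (c *: p + q) = c *: D p + D q) /\
  (forall p q : P, D (p * q) = p * D q + D p * q).

Definition isPoisson (br : P -> P -> P) : Prop :=
  [/\ forall (c : F) (p q r : P), br (c *: p + q) r = c *: br p r + br q r,
      forall (c : F) (p q r : P), br r (c *: p + q) = c *: br r p + br r q,
      forall p q : P, br p q = - br q p,
      forall p q r : P, br p (br q r) + br q (br r p) + br r (br p q) = 0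
    & forall p q r : P, br p (q * r) = q * br p r + br p q * r].

Definition poisson_tensor (br : P -> P -> P) : 'M[P]_n :=
  \matrix_(i, j) br 'X_i 'X_j.

Definition symplectic (br : P -> P -> P) : Prop :=
  poisson_tensor br \in unitmx.

Definition is_ideal (I : P -> Prop) : Prop :=
  [/\ I 0, (forall a b, I a -> I b -> I (a + b)) & (forall p a, I a -> I (p * a))].

Definition poisson_ideal (br : P -> P -> P) (I : P -> Prop) : Prop :=
  is_ideal I /\ (forall a p, I a -> I (br a p)).

Definition inIDer (I : P -> Prop) (D : P -> P) : Prop :=
  exists (m : nat) (f : 'I_m -> P) (E : 'I_m -> P -> P),
    [/\ forall j, I (f j), forall j, isDer (E j)
      & forall p, D p = \sum_(j < m) f j * E j p].

Definition isDerI (I : P -> Prop) (D : P -> P) : Prop :=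
  isDer D /\ (forall a, I a -> I (D a)).

(* two representatives in Der_I(P) define the same element of
   Der(A) = Der_I(P) / I Der(P) *)
Definition der_eqmod (I : P -> Prop) (D D' : P -> P) : Prop :=
  inIDer I (fun p => D p - D' p).

(* An element of (Omega_{A|k})^sharp is represented by a finite list
   [(c_1,a_1);...;(c_m,a_m)] of elements of P, standing for the class of
   sum_i c_i {a_i, _} (coefficients c_i represent elements of A = P/I). *)
Definition ham_der (br : P -> P -> P) (L : seq (P * P)) : P -> P :=
  fun p => \sum_(ca <- L) ca.1 * br ca.2 p.

Definition omega_ham (L : seq (P * P)) (X : P -> P) : P :=
  \sum_(ca <- L) ca.1 * X ca.2.

Definition omega_ham2 (br : P -> P -> P) (L1 L2 : seq (P * P)) : P :=
  omega_ham L1 (ham_der br L2).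

Definition der_comm (D1 D2 : P -> P) : P -> P := fun p => D1 (D2 p) - D2 (D1 p).

(* Koszul formula for the naive de Rham differential of a 2-cochain w on
   the Lie-Rinehart algebra (Omega^sharp, A), evaluated on representatives:
   L0, L1, L2 represent X_0, X_1, X_2, and L01, L02, L12 represent the
   brackets [X_0,X_1], [X_0,X_2], [X_1,X_2] (elements of Omega^sharp). *)
Definition koszul2 (br : P -> P -> P) (w : seq (P * P) -> seq (P * P) -> P)
    (L0 L1 L2 L01 L02 L12 : seq (P * P)) : P :=
  ham_der br L0 (w L1 L2) - ham_der br L1 (w L0 L2) + ham_der br L2 (w L0 L1)
  - w L01 L2 + w L02 L1 - w L12 L0.

End PoissonDefs.

(* Main.v *)
Require Import Defs.
From HB Require Import structures.
From mathcomp Require Import all_boot all_order all_algebra.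
From mathcomp Require Import mpoly.
From mathcomp Require Import ring.
Import GRing.Theory.
Local Open Scope ring_scope.
Set Implicit Arguments. Unset Strict Implicit.

Section S.
Variables (F : fieldType) (n : nat).
Notation P := {mpoly F[n]}.
Variable br : P -> P -> P.
Hypothesis Hp : isPoisson br.

Lemma brlin c p q r : br r (c *: p + q) = c *: br r p + br r q.
Proof. by case: Hp. Qed.
Lemma brlinl c p q r : br (c *: p + q) r = c *: br p r + br q r.
Proof. by case: Hp. Qed.
Lemma anti p q : br p q = - br q p.
Proof. by case: Hp. Qed.
Lemma jacobi p q r : br p (br q r) + br q (br r p) + br r (br p q) = 0.
Proof. by case: Hp. Qed.
Lemma brM p q r : br p (q * r) = q * br p r + br p q * r.
Proof. by case: Hp. Qed.

Lemma brD r p q : br r (p + q) = br r p + br r q.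
Proof. by have := brlin 1 p q r; rewrite !scale1r. Qed.
Lemma br0 r : br r 0 = 0.
Proof. have := brD r 0 0; rewrite addr0 => /(congr1 (fun x => x - br r 0)); rewrite subrr addrK; by move=> <-. Qed.
Lemma brN r p : br r (- p) = - br r p.
Proof. by rewrite -[- p]addr0 -scaleN1r brlin br0 addr0 scaleN1r. Qed.
Lemma brsum r (T : Type) (s : seq T) (f : T -> P) :
  br r (\sum_(x <- s) f x) = \sum_(x <- s) br r (f x).
Proof. elim: s => [|x s IH]; by rewrite ?big_nil ?br0 // !big_cons brD IH. Qed.


Lemma key c a d b e g :
  c * br a (d * (e * br g b)) - d * br b (c * (e * br g a)) + e * br g (c * (d * br b a))
  + e * (c * br a (d * br b g) - d * br b (c * br a g))
  - d * (c * br a (e * br g b) - e * br g (c * br a b))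
  + c * (d * br b (e * br g a) - e * br g (d * br b a)) = 0.
Proof.
have J := jacobi a b g; rewrite (anti g a) brN in J.
have Jg : br g (br a b) = br b (br a g) - br a (br b g).
  by move/eqP: J; rewrite addrC addr_eq0 => /eqP ->; ring.
rewrite !brM (anti g b) (anti g a) (anti b a) !brN Jg; ring.
Qed.

Lemma key2 c a d b p :
  c * br a (d * br b p) - d * br b (c * br a p)
  = c * d * br (br a b) p + c * br a d * br b p + - (d * br b c) * br a p.
Proof.
have J := jacobi a b p; rewrite (anti p a) (anti p (br a b)) brN in J.
have Jg : br (br a b) p = br a (br b p) - br b (br a p).
  by move/eqP: J; rewrite -addrA addr_eq0 => /eqP ->; ring.
rewrite !brM Jg; ring.
Qed.

Lemma comm_expand (L0 L1 : seq (P * P)) g :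
  der_comm (ham_der br L0) (ham_der br L1) g =
  \sum_(x <- L0) \sum_(y <- L1)
     (x.1 * br x.2 (y.1 * br y.2 g) - y.1 * br y.2 (x.1 * br x.2 g)).
Proof.
rewrite /der_comm /ham_der.
have e1 : \sum_(x <- L0) x.1 * br x.2 (\sum_(y <- L1) y.1 * br y.2 g)
   = \sum_(x <- L0) \sum_(y <- L1) x.1 * br x.2 (y.1 * br y.2 g).
  by apply: eq_bigr => x _; rewrite brsum big_distrr.
have e2 : \sum_(y <- L1) y.1 * br y.2 (\sum_(x <- L0) x.1 * br x.2 g)
   = \sum_(x <- L0) \sum_(y <- L1) y.1 * br y.2 (x.1 * br x.2 g).
  by rewrite [RHS]exchange_big; apply: eq_bigr => y _; rewrite brsum big_distrr.
rewrite e1 e2 -sumrB; apply: eq_bigr => x _; by rewrite -sumrB.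
Qed.

Lemma omega_anti (L L' : seq (P * P)) :
  omega_ham L (ham_der br L') = - omega_ham L' (ham_der br L).
Proof.
rewrite /omega_ham /ham_der.
under eq_bigr => x _ do rewrite big_distrr.
rewrite exchange_big -sumrN; apply: eq_bigr => y _.
rewrite big_distrr -sumrN; apply: eq_bigr => x _ /=.
rewrite (anti y.2 x.2); ring.
Qed.

Lemma E0 (L0 L1 L2 : seq (P * P)) :
  ham_der br L0 (omega_ham L1 (ham_der br L2))
  - ham_der br L1 (omega_ham L0 (ham_der br L2))
  + ham_der br L2 (omega_ham L0 (ham_der br L1))
  + omega_ham L2 (der_comm (ham_der br L0) (ham_der br L1))
  - omega_ham L1 (der_comm (ham_der br L0) (ham_der br L2))
  + omega_ham L0 (der_comm (ham_der br L1) (ham_der br L2)) = 0.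
Proof.
have e1 : ham_der br L0 (omega_ham L1 (ham_der br L2)) =
  \sum_(x <- L0) \sum_(y <- L1) \sum_(z <- L2) x.1 * br x.2 (y.1 * (z.1 * br z.2 y.2)).
  rewrite /ham_der /omega_ham; apply: eq_bigr => x _; rewrite brsum big_distrr.
  by apply: eq_bigr => y _; rewrite big_distrr brsum big_distrr.
have e2 : ham_der br L1 (omega_ham L0 (ham_der br L2)) =
  \sum_(x <- L0) \sum_(y <- L1) \sum_(z <- L2) y.1 * br y.2 (x.1 * (z.1 * br z.2 x.2)).
  rewrite [RHS]exchange_big /ham_der /omega_ham; apply: eq_bigr => y _; rewrite brsum big_distrr.
  by apply: eq_bigr => x _; rewrite big_distrr brsum big_distrr.
have e3 : ham_der br L2 (omega_ham L0 (ham_der br L1)) =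
  \sum_(x <- L0) \sum_(y <- L1) \sum_(z <- L2) z.1 * br z.2 (x.1 * (y.1 * br y.2 x.2)).
  under [RHS]eq_bigr => x _ do rewrite exchange_big.
  rewrite [RHS]exchange_big /ham_der /omega_ham; apply: eq_bigr => z _; rewrite brsum big_distrr.
  by apply: eq_bigr => x _; rewrite big_distrr brsum big_distrr.
have e4 : omega_ham L2 (der_comm (ham_der br L0) (ham_der br L1)) =
  \sum_(x <- L0) \sum_(y <- L1) \sum_(z <- L2)
     z.1 * (x.1 * br x.2 (y.1 * br y.2 z.2) - y.1 * br y.2 (x.1 * br x.2 z.2)).
  under [RHS]eq_bigr => x _ do rewrite exchange_big.
  rewrite [RHS]exchange_big /omega_ham; apply: eq_bigr => z _; rewrite comm_expand big_distrr.
  by apply: eq_bigr => x _; rewrite big_distrr.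
have e5 : omega_ham L1 (der_comm (ham_der br L0) (ham_der br L2)) =
  \sum_(x <- L0) \sum_(y <- L1) \sum_(z <- L2)
     y.1 * (x.1 * br x.2 (z.1 * br z.2 y.2) - z.1 * br z.2 (x.1 * br x.2 y.2)).
  rewrite [RHS]exchange_big /omega_ham; apply: eq_bigr => y _; rewrite comm_expand big_distrr.
  by apply: eq_bigr => x _; rewrite big_distrr.
have e6 : omega_ham L0 (der_comm (ham_der br L1) (ham_der br L2)) =
  \sum_(x <- L0) \sum_(y <- L1) \sum_(z <- L2)
     x.1 * (y.1 * br y.2 (z.1 * br z.2 x.2) - z.1 * br z.2 (y.1 * br y.2 x.2)).
  rewrite /omega_ham; apply: eq_bigr => x _; rewrite comm_expand big_distrr.
  by apply: eq_bigr => y _; rewrite big_distrr.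
rewrite e1 e2 e3 e4 e5 e6.
rewrite -sumrB -big_split -big_split -sumrB -big_split /=.
rewrite big1 // => x _.
rewrite -sumrB -big_split -big_split -sumrB -big_split /=.
rewrite big1 // => y _.
rewrite -sumrB -big_split -big_split -sumrB -big_split /=.
rewrite big1 // => z _.
exact: key.
Qed.

Lemma derl r : isDer (fun p => br p r).
Proof.
split; first by move=> c p q; rewrite brlinl.
move=> p q /=; rewrite (anti (p * q) r) brM (anti r q) (anti r p); ring.
Qed.

Lemma Hsum2 (L1 L2 : seq (P * P)) p :
  ham_der br ([seq (x.1 * y.1, br x.2 y.2) | x <- L1, y <- L2]
           ++ [seq (x.1 * br x.2 y.1, y.2) | x <- L1, y <- L2]
           ++ [seq (- (y.1 * br y.2 x.1), x.2) | x <- L1, y <- L2]) p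
  = der_comm (ham_der br L1) (ham_der br L2) p.
Proof.
rewrite /ham_der !big_cat !big_allpairs_dep /= comm_expand -!big_split /=.
apply: eq_bigr => x _; rewrite -!big_split /=; apply: eq_bigr => y _.
rewrite key2; ring.
Qed.

Lemma omega_self (L : seq (P * P)) : omega_ham L (ham_der br L) *+ 2 = 0.
Proof.
rewrite mulr2n; apply/eqP; rewrite addr_eq0; apply/eqP.
by rewrite -[in RHS](omega_anti L L).
Qed.

End S.
Lemma chain (F : fieldType) (n : nat) (D : {mpoly F[n]} -> {mpoly F[n]}) :
  isDer D -> forall p, D p = \sum_(i < n) mderiv i p * D 'X_i.
Proof.
move=> [Dl DM].
have DD p q : D (p + q) = D p + D q by have := Dl 1 p q; rewrite !scale1r.
have D0 : D 0 = 0.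
  by have := DD 0 0; rewrite addr0 => /(congr1 (fun x => x - D 0)); rewrite subrr addrK => <-.
have DZ c p : D (c *: p) = c *: D p by have := Dl c p 0; rewrite !addr0 D0 addr0.
have D1 : D 1 = 0.
  by have := DM 1 1; rewrite !mul1r !mulr1 => /(congr1 (fun x => x - D 1)); rewrite subrr addrK => <-.
pose G p := D p = \sum_(i < n) mderiv i p * D 'X_i.
have G1 : G 1.
  rewrite /G D1 big1 // => i _; by rewrite -mpolyC1 mderivC mul0r.
have GM p q : G p -> G q -> G (p * q).
  rewrite /G DM => -> ->; rewrite big_distrr big_distrl -big_split /=.
  apply: eq_bigr => i _; rewrite mderivM; ring.
have GX j : G 'X_j.
  rewrite /G (bigD1 j) //= big1 ?addr0.
    rewrite mderivX mnm1E eqxx.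
    have -> : (U_(j) - U_(j))%MM = 0%MM by apply/mnmP => k; rewrite mnmBE subnn mnm0E.
    by rewrite mpolyX0 scale1r mul1r.
  move=> i /negbTE ij; rewrite mderivX mnm1E eq_sym ij scale0r mul0r //.
have GXm m : G 'X_[m].
  rewrite mpolyXE_id; apply: (big_ind G) => //= i _.
  elim: (m i) => [|k IH]; first by rewrite expr0.
  by rewrite exprS; apply: GM.
elim/mpolyind => [|c m p _ _ IH].
  by rewrite D0 big1 // => i _; rewrite mderiv0 mul0r.
rewrite DD DZ GXm IH scaler_sumr -big_split /=; apply: eq_bigr => i _.
by rewrite mderivD mderivZ mulrDl scalerAl.
Qed.

Section Id.
Variables (F : fieldType) (n : nat).
Notation P := {mpoly F[n]}.
Variable I : P -> Prop.
Hypothesis HI : is_ideal I.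

Lemma I0 : I 0. Proof. by case: HI. Qed.
Lemma Iadd a b : I a -> I b -> I (a + b). Proof. by case: HI => _ h _; apply: h. Qed.
Lemma Imul p a : I a -> I (p * a). Proof. by case: HI => _ _ h; apply: h. Qed.
Lemma Imulr p a : I a -> I (a * p). Proof. by rewrite mulrC; apply: Imul. Qed.
Lemma Iopp a : I a -> I (- a). Proof. by move=> h; rewrite -mulN1r; apply: Imul. Qed.
Lemma Isub a b : I a -> I b -> I (a - b). Proof. by move=> ha hb; apply: Iadd => //; apply: Iopp. Qed.
Lemma Isum (T : Type) (s : seq T) (Q : pred T) (f : T -> P) :
  (forall x, I (f x)) -> I (\sum_(x <- s | Q x) f x).
Proof. by move=> h; apply: big_ind => //; [apply: I0 | apply: Iadd]. Qed.

Lemma inIDer_val D : inIDer I D -> forall p, I (D p).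
Proof.
case=> m [f [E [hf _ hD]]] p; rewrite hD; apply: Isum => j; exact: Imulr.
Qed.

Lemma omega_diff (L : seq (P * P)) D D' :
  (forall p, I (D p - D' p)) -> I (omega_ham L D - omega_ham L D').
Proof.
move=> h; rewrite /omega_ham -sumrB; apply: Isum => x; rewrite -mulrBr; exact: Imul.
Qed.

Lemma sum_chain (L : seq (P * P)) D : isDer D ->
  \sum_(x <- L) x.1 * D x.2 = \sum_(k < n) (\sum_(x <- L) x.1 * mderiv k x.2) * D 'X_k.
Proof.
move=> hD; under eq_bigr => x _ do rewrite (chain hD) big_distrr.
rewrite exchange_big; apply: eq_bigr => k _; rewrite big_distrl; apply: eq_bigr => x _ /=.
by rewrite mulrA.
Qed.

Lemma part1 br (Hp : isPoisson br) (Hs : symplectic br) (L L' : seq (P * P)) X :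
  isDer X -> (forall p, I (ham_der br L p - ham_der br L' p)) ->
  I (omega_ham L X - omega_ham L' X).
Proof.
move=> hX hL.
pose al k := \sum_(x <- L) x.1 * mderiv k x.2 - \sum_(x <- L') x.1 * mderiv k x.2.
have hH l : ham_der br L 'X_l - ham_der br L' 'X_l = \sum_k al k * br 'X_k 'X_l.
  rewrite /ham_der (sum_chain L (derl Hp 'X_l)) (sum_chain L' (derl Hp 'X_l)) -sumrB.
  by apply: eq_bigr => k _; rewrite mulrBl.
pose av := \row_k al k.
have hav : av *m poisson_tensor br = \row_l (ham_der br L 'X_l - ham_der br L' 'X_l).
  by apply/rowP => l; rewrite !mxE hH; apply: eq_bigr => k _; rewrite !mxE.
have alI k : I (al k).
  have -> : al k = av 0 k by rewrite mxE.
  rewrite -(mulmxK Hs av) hav mxE; apply: Isum => l; rewrite mxE; exact: Imulr.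
have -> : omega_ham L X - omega_ham L' X = \sum_k al k * X 'X_k.
  rewrite /omega_ham (sum_chain L hX) (sum_chain L' hX) -sumrB.
  by apply: eq_bigr => k _; rewrite mulrBl.
apply: Isum => k.
exact: (Imulr (X 'X_k) (alI k)).
Qed.


End Id.

Unset Implicit Arguments. Set Strict Implicit.
Theorem mainTheorem2 (F : fieldType) (n : nat)
    (br : {mpoly F[n]} -> {mpoly F[n]} -> {mpoly F[n]})
    (I : {mpoly F[n]} -> Prop) :
  [pchar F] =i pred0 ->
  isPoisson br -> symplectic br -> poisson_ideal br I ->
  (* (1) omega^Ham is well defined on (Omega^sharp) x Der(A) *)
  (forall (L L' : seq ({mpoly F[n]} * {mpoly F[n]}))
          (X X' : {mpoly F[n]} -> {mpoly F[n]}),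
      isDerI I X -> isDerI I X' ->
      der_eqmod I (ham_der br L) (ham_der br L') ->
      der_eqmod I X X' ->
      I (omega_ham L X - omega_ham L' X'))
  /\
  (* (2) the restriction to Omega^sharp x Omega^sharp is an alternating
         2-cochain of the Lie-Rinehart algebra (Omega^sharp, A), Omega^sharp is
         closed under the commutator bracket, and delta^Ham omega^Ham = 0 *)
  ((forall L : seq ({mpoly F[n]} * {mpoly F[n]}), I (omega_ham2 br L L))
   /\ (forall L1 L2 : seq ({mpoly F[n]} * {mpoly F[n]}),
         exists L12 : seq ({mpoly F[n]} * {mpoly F[n]}),
           der_eqmod I (ham_der br L12)
                       (der_comm (ham_der br L1) (ham_der br L2)))
   /\ (forall L0 L1 L2 L01 L02 L12 : seq ({mpoly F[n]} * {mpoly F[n]}),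
         der_eqmod I (ham_der br L01) (der_comm (ham_der br L0) (ham_der br L1)) ->
         der_eqmod I (ham_der br L02) (der_comm (ham_der br L0) (ham_der br L2)) ->
         der_eqmod I (ham_der br L12) (der_comm (ham_der br L1) (ham_der br L2)) ->
         I (koszul2 br (omega_ham2 br) L0 L1 L2 L01 L02 L12))).
Proof.
move=> Hch Hp Hs [HI _].
split.
  move=> L L' X X' [XD _] [X'D _] HL HX.
  have h1 : I (omega_ham L X - omega_ham L X').
    exact: (@omega_diff _ _ _ HI L X X' (inIDer_val HI HX)).
  have h2 : I (omega_ham L X' - omega_ham L' X').
    exact: (@part1 _ _ _ HI br Hp Hs L L' X' X'D (inIDer_val HI HL)).
  have -> : omega_ham L X - omega_ham L' X' =
     (omega_ham L X - omega_ham L X') + (omega_ham L X' - omega_ham L' X') by ring.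
  exact: (Iadd HI h1 h2).
split.
  move=> L; rewrite /omega_ham2.
  have h2 : (2%:R : F) != 0 by move/pcharf0P: Hch => ->.
  have -> : omega_ham L (ham_der br L) = 0.
    have h := omega_self Hp L.
    by rewrite -[LHS](scale1r (R := F)) -(mulVf h2) -scalerA scaler_nat h scaler0.
  exact: (I0 HI).
split.
  move=> L1 L2.
  exists ([seq (x.1 * y.1, br x.2 y.2) | x <- L1, y <- L2]
           ++ [seq (x.1 * br x.2 y.1, y.2) | x <- L1, y <- L2]
           ++ [seq (- (y.1 * br y.2 x.1), x.2) | x <- L1, y <- L2]).
  exists 0%N, (fun _ => 0), (fun _ p => p); split.
  - by case=> m hm; rewrite ltn0 in hm.
  - by case=> m hm; rewrite ltn0 in hm.
  - by move=> p; rewrite big_ord0 (Hsum2 Hp) subrr.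
move=> L0 L1 L2 L01 L02 L12 h01 h02 h12.
rewrite /koszul2 /omega_ham2 (omega_anti Hp L01 L2) (omega_anti Hp L02 L1) (omega_anti Hp L12 L0).
have E := E0 Hp L0 L1 L2.
have d1 := @omega_diff _ _ _ HI L2 _ _ (inIDer_val HI h01).
have d2 := @omega_diff _ _ _ HI L1 _ _ (inIDer_val HI h02).
have d3 := @omega_diff _ _ _ HI L0 _ _ (inIDer_val HI h12).
move: E d1 d2 d3.
set a1 := ham_der br L0 _.
set a2 := ham_der br L1 _.
set a3 := ham_der br L2 _.
set b1 := omega_ham L2 (der_comm _ _).
set b2 := omega_ham L1 (der_comm _ _).
set b3 := omega_ham L0 (der_comm _ _).
set c1 := omega_ham L2 _.
set c2 := omega_ham L1 _.
set c3 := omega_ham L0 _.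
move=> E d1 d2 d3.
have -> : a1 - a2 + a3 - - c1 + - c2 - - c3 =
   (a1 - a2 + a3 + b1 - b2 + b3) + (c1 - b1) - (c2 - b2) + (c3 - b3) by ring.
rewrite E add0r; apply: (Iadd HI) => //; apply: (Isub HI) => //.
Qed.
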